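(* Let $M$ be a path-connected pre-$\Delta$-monoid with identity $e$, and let $\alpha_n,\beta_n\in\Omega(M,e)$ be null-sequences. Then $\prod_{n=1}^{\infty}(\alpha_n\cdot\beta_n)\simeq\left(\prod_{n=1}^{\infty}\alpha_n\right)\cdot\left(\prod_{n=1}^{\infty}\beta_n\right)$ by a path-homotopy whose image lies in $\mathrm{Im}\left(\prod_{n=1}^\infty\alpha_n\right)\ast\mathrm{Im}\left(\prod_{n=1}^\infty\beta_n\right)$.
   Context: A pre-$\Delta$-monoid is a space $M$ with an associative operation $\ast$ with identity $e$ such that for any continuous paths $\alpha,\beta:[0,1]\to M$, the pointwise product $t\mapsto\alpha(t)\ast\beta(t)$ is continuous. For $A,B\subseteq M$, $A\ast B=\{a\ast b\mid a\in A,b\in B\}$. $\alpha\cdot\beta$ denotes path concatenation. A sequence of loops $\alpha_n\in\Omega(M,e)$ is a null-sequence if every neighborhood of $e$ contains $\mathrm{Im}(\alpha_n)$ for all but finitely many $n$; its infinite concatenation $\prod_{n=1}^\infty\alpha_n$ is the loop equal to (a linear reparametrization of) $\alpha_n$ on $[\frac{n-1}{n},\frac{n}{n+1}]$ and sending $1$ to $e$. *)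

(* Defs.v *)
(* topology on M is given abstractly; [0,1] and [0,1]^2 carry
   their standard metric topology (continuity stated epsilon-delta style,
   which is literally "preimages of open sets are open" for metric domains). *)
From Stdlib Require Import Reals Lra ZArith.
Open Scope R_scope.

Record topology (X : Type) := Topology {
  is_open : (X -> Prop) -> Prop;
  open_full : is_open (fun _ => True);
  open_inter : forall U V, is_open U -> is_open V -> is_open (fun x => U x /\ V x);
  open_union : forall F : (X -> Prop) -> Prop,
      (forall U, F U -> is_open U) -> is_open (fun x => exists U, F U /\ U x)
}.
Arguments is_open {X} _ _.

Definition I : Type := {t : R | 0 <= t <= 1}.
Definition ival (t : I) : R := proj1_sig t.

Lemma clamp01 (r : R) : 0 <= Rmax 0 (Rmin 1 r) <= 1.
Proof. unfold Rmax, Rmin; repeat destruct Rle_dec; lra. Qed.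

Definition mkI (r : R) : I := exist _ (Rmax 0 (Rmin 1 r)) (clamp01 r).

Definition path_continuous {X : Type} (T : topology X) (f : I -> X) : Prop :=
  forall V, is_open T V -> forall s : I, V (f s) ->
    exists eps, eps > 0 /\ forall s' : I, Rabs (ival s' - ival s) < eps -> V (f s').

Definition cont2 {X : Type} (T : topology X) (H : I -> I -> X) : Prop :=
  forall V, is_open T V -> forall s t : I, V (H s t) ->
    exists eps, eps > 0 /\ forall s' t' : I,
      Rabs (ival s' - ival s) < eps -> Rabs (ival t' - ival t) < eps -> V (H s' t').

Definition path_connected {X : Type} (T : topology X) : Prop :=
  forall x y : X, exists p : I -> X, path_continuous T p /\
    (forall t : I, ival t = 0 -> p t = x) /\ (forall t : I, ival t = 1 -> p t = y).

Definition pre_delta_monoid {M : Type} (T : topology M) (op : M -> M -> M) (e : M) : Prop :=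
  (forall x y z, op x (op y z) = op (op x y) z) /\
  (forall x, op e x = x) /\ (forall x, op x e = x) /\
  (forall a b : I -> M, path_continuous T a -> path_continuous T b ->
     path_continuous T (fun t => op (a t) (b t))).

Definition is_loop {M : Type} (T : topology M) (e : M) (f : I -> M) : Prop :=
  path_continuous T f /\ (forall t : I, ival t = 0 -> f t = e) /\
  (forall t : I, ival t = 1 -> f t = e).

Definition null_seq {M : Type} (T : topology M) (e : M) (a : nat -> I -> M) : Prop :=
  forall U, is_open T U -> U e ->
    exists N : nat, forall n, (N <= n)%nat -> forall t : I, U (a n t).

Definition concat {M : Type} (a b : I -> M) (t : I) : M :=
  if Rle_dec (ival t) (1/2) then a (mkI (2 * ival t)) else b (mkI (2 * ival t - 1)).

(* Infinite concatenation; a 0 plays the role of alpha_1.  The k-th term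
   (k >= 0) occupies [k/(k+1), (k+1)/(k+2)], linearly reparametrized;
   for t < 1 the index is k = floor(1/(1-t)) - 1; t = 1 goes to e. *)
Definition inf_concat {M : Type} (e : M) (a : nat -> I -> M) (t : I) : M :=
  if Rlt_dec (ival t) 1 then
    let k := Z.to_nat (Int_part (/ (1 - ival t)) - 1) in
    a k (mkI ((ival t - INR k / INR (k + 1)) * INR (k + 1) * INR (k + 2)))
  else e.

Definition image {M : Type} (f : I -> M) : M -> Prop := fun x => exists t, f t = x.

Definition setmul {M : Type} (op : M -> M -> M) (A B : M -> Prop) : M -> Prop :=
  fun x => exists a b, A a /\ B b /\ x = op a b.

Definition path_homotopic_in {M : Type} (T : topology M) (f g : I -> M) (S : M -> Prop) : Prop :=
  exists H : I -> I -> M, cont2 T H /\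
    (forall s t : I, ival t = 0 -> H s t = f s) /\
    (forall s t : I, ival t = 1 -> H s t = g s) /\
    (forall s t : I, ival s = 0 -> H s t = f s) /\
    (forall s t : I, ival s = 1 -> H s t = f s) /\
    (forall s t : I, S (H s t)).

(* Main.v *)
Require Import Defs.
From Stdlib Require Import Reals.
From Stdlib Require Import Lra Lia ZArith Psatz Classical ClassicalEpsilon ProofIrrelevance.
Open Scope R_scope.

Lemma I_eq (x y : I) : ival x = ival y -> x = y.
Proof. destruct x as [x hx], y as [y hy]; simpl; intros ->. f_equal; apply proof_irrelevance. Qed.

Lemma ival_range (x : I) : 0 <= ival x <= 1.
Proof. destruct x; auto. Qed.

Lemma ival_mkI r : 0 <= r <= 1 -> ival (mkI r) = r.
Proof. intros. unfold mkI, ival; simpl. unfold Rmax, Rmin; repeat destruct Rle_dec; lra. Qed.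

Lemma mkI_ival x : mkI (ival x) = x.
Proof. apply I_eq. apply ival_mkI, ival_range. Qed.

Lemma mkI_lip r s : Rabs (ival (mkI r) - ival (mkI s)) <= Rabs (r - s).
Proof. unfold mkI, ival; simpl. unfold Rmax, Rmin, Rabs; repeat destruct Rle_dec; repeat destruct Rcase_abs; lra. Qed.

Definition blk (x : R) : nat := Z.to_nat (Int_part (/ (1 - x)) - 1).
Definition loc (k : nat) (x : R) : R := (x - INR k / INR (k + 1)) * INR (k + 1) * INR (k + 2).
Definition pt (k : nat) (l : R) : R := INR k / (INR k + 1) + l / ((INR k + 1) * (INR k + 2)).

Lemma INR1 k : INR (k + 1) = INR k + 1.
Proof. rewrite plus_INR; simpl; ring. Qed.
Lemma INR2 k : INR (k + 2) = INR k + 2.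
Proof. rewrite plus_INR; simpl; ring. Qed.

Lemma loc_eq k x : loc k x = (x * (INR k + 1) - INR k) * (INR k + 2).
Proof. unfold loc; rewrite INR1, INR2. field. pose proof (pos_INR k); lra. Qed.

Lemma inv_fact y : 0 < y -> y * / y = 1 /\ 0 < / y.
Proof. intros; split; [field; lra | apply Rinv_0_lt_compat; lra]. Qed.

Lemma blk_eq k x : INR k <= x * (INR k + 1) -> x * (INR k + 2) < INR k + 1 -> blk x = k.
Proof.
  intros h1 h2. pose proof (pos_INR k) as hk. set (K := INR k) in *.
  assert (hx : x < 1) by nra.
  destruct (inv_fact (1 - x)) as [hz hz0]; [lra|]. set (z := / (1 - x)) in *.
  assert (H1 : z < IZR (Z.of_nat k + 2)).
  { rewrite plus_IZR, <- INR_IZR_INZ. fold K. nra. }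
  assert (H2 : IZR (Z.of_nat k + 2) <= z + 1).
  { rewrite plus_IZR, <- INR_IZR_INZ. fold K. nra. }
  unfold blk, Int_part. fold z. rewrite <- (tech_up _ _ H1 H2).
  replace (Z.of_nat k + 2 - 1 - 1)%Z with (Z.of_nat k) by ring. apply Nat2Z.id.
Qed.

Lemma blk_spec x : 0 <= x < 1 ->
  INR (blk x) <= x * (INR (blk x) + 1) /\ x * (INR (blk x) + 2) < INR (blk x) + 1.
Proof.
  intros hx. destruct (inv_fact (1 - x)) as [hz hz0]; [lra|].
  assert (hz1 : 1 <= / (1 - x)) by nra.
  unfold blk. set (z := / (1 - x)) in *.
  destruct (base_Int_part z) as [b1 b2]. set (m := Int_part z) in *.
  assert (hm : (0 < m)%Z) by (apply lt_0_IZR; lra).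
  rewrite INR_IZR_INZ, Z2Nat.id by lia. rewrite minus_IZR. simpl.
  split; nra.
Qed.

Lemma pt_loc k x : pt k (loc k x) = x.
Proof. unfold pt; rewrite loc_eq. field. pose proof (pos_INR k); lra. Qed.

Lemma pt_block k l : 0 <= l < 1 ->
  INR k <= pt k l * (INR k + 1) /\ pt k l * (INR k + 2) < INR k + 1.
Proof.
  intros hl. pose proof (pos_INR k) as hk. unfold pt.
  replace ((INR k / (INR k + 1) + l / ((INR k + 1) * (INR k + 2))) * (INR k + 1))
    with (INR k + l / (INR k + 2)) by (field; lra).
  replace ((INR k / (INR k + 1) + l / ((INR k + 1) * (INR k + 2))) * (INR k + 2))
    with (INR k * (INR k + 2) / (INR k + 1) + l / (INR k + 1)) by (field; lra).
  destruct (inv_fact (INR k + 2)) as [a1 a2]; [lra|].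
  destruct (inv_fact (INR k + 1)) as [b1 b2]; [lra|].
  unfold Rdiv. split; [nra|].
  assert (INR k * (INR k + 2) * / (INR k + 1) + l * / (INR k + 1) = (INR k * (INR k + 2) + l) * / (INR k + 1)) by ring.
  rewrite H.
  apply Rmult_lt_reg_r with (INR k + 1); [lra|].
  rewrite Rmult_assoc, (Rmult_comm (/ _)), b1. nra.
Qed.

Lemma loc_pt k l : loc k (pt k l) = l.
Proof. rewrite loc_eq; unfold pt. field. pose proof (pos_INR k); lra. Qed.

Lemma pt_range k l : 0 <= l <= 1 -> 0 <= pt k l <= 1.
Proof.
  intros hl. pose proof (pos_INR k) as hk. unfold pt.
  replace (INR k / (INR k + 1) + l / ((INR k + 1) * (INR k + 2))) with
    ((INR k * (INR k + 2) + l) / ((INR k + 1) * (INR k + 2))) by (field; lra).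
  split. apply Rmult_le_pos; [nra|]. left; apply Rinv_0_lt_compat; nra.
  apply Rmult_le_reg_r with ((INR k + 1) * (INR k + 2)); [nra|].
  unfold Rdiv; rewrite Rmult_assoc, Rinv_l by nra. nra.
Qed.

Lemma pt_S k : pt k 1 = pt (S k) 0.
Proof. unfold pt. rewrite S_INR. field. pose proof (pos_INR k); lra. Qed.

Lemma pt_lo k l : 0 <= l <= 1 -> 1 - / (INR k + 1) <= pt k l.
Proof.
  intros hl. pose proof (pos_INR k) as hk. unfold pt.
  replace (1 - / (INR k + 1)) with (INR k / (INR k + 1)) by (field; lra).
  assert (0 <= l / ((INR k + 1) * (INR k + 2))).
  { apply Rmult_le_pos; [lra|]. left; apply Rinv_0_lt_compat; nra. } lra.
Qed.

Section ICbasic.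
Context {X : Type} (e : X) (a : nat -> I -> X).

Lemma ic_one t : ival t = 1 -> inf_concat e a t = e.
Proof. intros h; unfold inf_concat; destruct Rlt_dec; [lra|reflexivity]. Qed.

Lemma ic_lt1 t : ival t < 1 -> inf_concat e a t = a (blk (ival t)) (mkI (loc (blk (ival t)) (ival t))).
Proof. intros h; unfold inf_concat; destruct Rlt_dec; [reflexivity|lra]. Qed.

Lemma ic_blk k t : INR k <= ival t * (INR k + 1) -> ival t * (INR k + 2) < INR k + 1 ->
  inf_concat e a t = a k (mkI (loc k (ival t))).
Proof.
  intros h1 h2. pose proof (pos_INR k). rewrite ic_lt1 by nra. rewrite (blk_eq k); auto.
Qed.

Lemma ic_pt k l : 0 <= l < 1 -> inf_concat e a (mkI (pt k l)) = a k (mkI l).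
Proof.
  intros hl. destruct (pt_block k l hl) as [h1 h2].
  rewrite <- (ival_mkI (pt k l)) in h1, h2 by (apply pt_range; lra).
  rewrite (ic_blk k) by auto. rewrite ival_mkI by (apply pt_range; lra). now rewrite loc_pt.
Qed.

Lemma ic_pt1 k : inf_concat e a (mkI (pt k 1)) = a (S k) (mkI 0).
Proof. rewrite pt_S. apply ic_pt. lra. Qed.

Lemma ic_zero t : ival t = 0 -> inf_concat e a t = a 0%nat (mkI 0).
Proof.
  intros h. rewrite (ic_blk 0); simpl; try lra. f_equal. f_equal. rewrite h, loc_eq. simpl. ring.
Qed.

Lemma I_decomp (s : I) : ival s < 1 -> s = mkI (pt (blk (ival s)) (loc (blk (ival s)) (ival s))).
Proof. intros h. apply I_eq. rewrite pt_loc, ival_mkI; auto. apply ival_range. Qed.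

Lemma loc_range s : 0 <= s < 1 -> 0 <= loc (blk s) s < 1.
Proof.
  intros hs. destruct (blk_spec s hs) as [h1 h2]. rewrite loc_eq.
  pose proof (pos_INR (blk s)). split; nra.
Qed.
End ICbasic.

Lemma divpos a c : 0 < a -> 0 < c -> 0 < a / c /\ a / c * c = a.
Proof. intros; split; [apply Rdiv_lt_0_compat; lra| field; lra]. Qed.

Section IC.
Context {X : Type} (T : topology X) (e : X) (a : nat -> I -> X).
Hypothesis Hc : forall n, path_continuous T (a n).
Hypothesis Hm : forall n (t t' : I), ival t = 1 -> ival t' = 0 -> a n t = a (S n) t'.
Hypothesis Hn : forall U, is_open T U -> U e -> exists N : nat, forall n, (N <= n)%nat -> forall t, U (a n t).

Lemma inf_concat_cont : path_continuous T (inf_concat e a).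
Proof.
  intros V HV s Hs. destruct (ival_range s) as [s0 s1].
  destruct (Req_dec (ival s) 1) as [E1|E1].
  - rewrite ic_one in Hs by auto. destruct (Hn V HV Hs) as [N HN].
    pose proof (pos_INR N) as hN.
    destruct (inv_fact (INR N + 1)) as [z1 z0]; [lra|].
    exists (/ (INR N + 1)). split; [lra|]. intros s' hs'.
    apply Rabs_def2 in hs'. destruct (ival_range s') as [s'0 s'1].
    destruct (Req_dec (ival s') 1) as [E2|E2]; [rewrite ic_one; auto|].
    assert (hs2 : 0 <= ival s' < 1) by lra.
    rewrite ic_lt1 by lra. apply HN.
    destruct (blk_spec _ hs2) as [b1 b2].
    destruct (le_lt_dec N (blk (ival s'))) as [l|l]; auto.
    exfalso. apply le_INR in l. rewrite S_INR in l.
    set (K := INR (blk (ival s'))) in *. set (z := / (INR N + 1)) in *.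
    assert (0 <= K) by apply pos_INR.
    assert ((1 - ival s') * (INR N + 1) < 1) by nra.
    nra.
  - assert (hs : 0 <= ival s < 1) by lra.
    destruct (blk_spec _ hs) as [b1 b2]. pose proof (loc_range _ hs) as hr.
    set (k := blk (ival s)) in *. set (r := loc k (ival s)) in *.
    pose proof (pos_INR k) as hk. set (K := INR k) in *.
    assert (Hs' := Hs). rewrite ic_lt1 in Hs by lra. fold k r in Hs.
    destruct (Hc k V HV (mkI r) Hs) as [eps1 [he1 Heps1]].
    set (c := (K + 1) * (K + 2)).
    assert (hc : 0 < c) by (unfold c; nra).
    destruct (divpos eps1 c he1 hc) as [q0 q1].
    assert (Right : exists d, d > 0 /\ forall s' : I, ival s <= ival s' -> ival s' - ival s < d -> V (inf_concat e a s')).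
    { set (dR := (K + 1 - ival s * (K + 2)) / (K + 2)).
      destruct (divpos (K + 1 - ival s * (K + 2)) (K + 2)) as [r0 r1]; [lra|lra|].
      fold dR in r0, r1.
      exists (Rmin (eps1 / c) dR). split; [apply Rmin_pos; lra|].
      intros s' l1 l2. pose proof (Rmin_l (eps1/c) dR). pose proof (Rmin_r (eps1/c) dR).
      assert (c1 : K <= ival s' * (K + 1)) by nra.
      assert (c2 : ival s' * (K + 2) < K + 1) by nra.
      rewrite (ic_blk _ _ k) by auto. apply Heps1.
      rewrite !ival_mkI.
      2: { unfold r. rewrite loc_eq. fold K. split; nra. }
      2: { rewrite loc_eq. fold K. split; nra. }
      unfold r; rewrite !loc_eq; fold K. apply Rabs_def1; unfold c in *; nra. }
    assert (Left : exists d, d > 0 /\ forall s' : I, ival s' <= ival s -> ival s - ival s' < d -> V (inf_concat e a s')).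
    { destruct (Rlt_le_dec 0 r) as [rp|rz].
      - set (dL := (ival s * (K + 1) - K) / (K + 1)).
        assert (0 < ival s * (K + 1) - K).
        { unfold r in rp. rewrite loc_eq in rp. fold K in rp. nra. }
        destruct (divpos (ival s * (K + 1) - K) (K + 1)) as [r0 r1]; [lra|lra|].
        fold dL in r0, r1.
        exists (Rmin (eps1 / c) dL). split; [apply Rmin_pos; lra|].
        intros s' l1 l2. pose proof (Rmin_l (eps1/c) dL). pose proof (Rmin_r (eps1/c) dL).
        assert (c1 : K <= ival s' * (K + 1)) by nra.
        assert (c2 : ival s' * (K + 2) < K + 1) by nra.
        rewrite (ic_blk _ _ k) by auto. apply Heps1.
        rewrite !ival_mkI.
        2: { unfold r. rewrite loc_eq. fold K. split; nra. }
        2: { rewrite loc_eq. fold K. split; nra. }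
        unfold r; rewrite !loc_eq; fold K. apply Rabs_def1; unfold c in *; nra.
      - assert (r0 : r = 0) by lra.
        assert (hsK : ival s * (K + 1) = K).
        { unfold r in r0; rewrite loc_eq in r0; fold K in r0. nra. }
        destruct k as [|j] eqn:Ek.
        + exists 1. split; [lra|]. intros s' l1 l2.
          assert (ival s = 0) by (unfold K in hsK; simpl in hsK; lra).
          destruct (ival_range s') as [u0 u1].
          replace s' with s by (apply I_eq; lra). exact Hs'.
        + pose proof (pos_INR j) as hj. unfold K in *. rewrite S_INR in *.
          set (J := INR j) in *.
          assert (Hj : V (a j (mkI 1))).
          { rewrite (Hm j (mkI 1) (mkI 0)); try (rewrite ival_mkI; lra).
            rewrite r0 in Hs. exact Hs. }
          destruct (Hc j V HV (mkI 1) Hj) as [eps2 [he2 Heps2]].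
          set (c' := (J + 1) * (J + 2)).
          assert (hc' : 0 < c') by (unfold c'; nra).
          destruct (divpos eps2 c' he2 hc') as [w0 w1].
          set (dL := (ival s * (J + 1) - J) / (J + 1)).
          assert (0 < ival s * (J + 1) - J) by nra.
          destruct (divpos (ival s * (J + 1) - J) (J + 1)) as [r1 r2]; [lra|lra|].
          fold dL in r1, r2.
          exists (Rmin (eps2 / c') dL). split; [apply Rmin_pos; lra|].
          intros s' l1 l2. pose proof (Rmin_l (eps2/c') dL). pose proof (Rmin_r (eps2/c') dL).
          destruct (Req_dec (ival s') (ival s)) as [Eq|Neq].
          { replace s' with s by (apply I_eq; lra). exact Hs'. }
          assert (c1 : J <= ival s' * (J + 1)) by nra.
          assert (c2 : ival s' * (J + 2) < J + 1) by nra.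
          rewrite (ic_blk _ _ j) by auto. apply Heps2.
          rewrite !ival_mkI.
          2: lra.
          2: { rewrite loc_eq. fold J. split; nra. }
          rewrite !loc_eq; fold J. apply Rabs_def1; unfold c' in *; nra. }
    destruct Right as [dr [hdr Hr]]. destruct Left as [dl [hdl Hl]].
    exists (Rmin dr dl). split; [apply Rmin_pos; lra|].
    intros s' hs'. apply Rabs_def2 in hs'. pose proof (Rmin_l dr dl). pose proof (Rmin_r dr dl).
    destruct (Rle_lt_dec (ival s) (ival s')).
    + apply Hr; lra.
    + apply Hl; lra.
Qed.
End IC.

Definition Iopen (U : I -> Prop) : Prop :=
  forall x, U x -> exists eps, eps > 0 /\ forall y : I, Rabs (ival y - ival x) < eps -> U y.

Lemma Iopen_full : Iopen (fun _ => True).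
Proof. intros x _; exists 1; split; auto; lra. Qed.
Lemma Iopen_inter U V : Iopen U -> Iopen V -> Iopen (fun x => U x /\ V x).
Proof.
  intros hU hV x [ux vx]. destruct (hU x ux) as [e1 [h1 H1]]. destruct (hV x vx) as [e2 [h2 H2]].
  exists (Rmin e1 e2); split; [apply Rmin_pos; lra|]. intros y hy.
  pose proof (Rmin_l e1 e2); pose proof (Rmin_r e1 e2). split; [apply H1|apply H2]; lra.
Qed.
Lemma Iopen_union (F : (I -> Prop) -> Prop) : (forall U, F U -> Iopen U) -> Iopen (fun x => exists U, F U /\ U x).
Proof.
  intros hF x [U [fU ux]]. destruct (hF U fU x ux) as [e1 [h1 H1]].
  exists e1; split; auto. intros y hy; exists U; split; auto.
Qed.
Definition Itop : topology I := {| is_open := Iopen; open_full := Iopen_full; open_inter := Iopen_inter; open_union := Iopen_union |}.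

Lemma ball_open (x : I) eps : is_open Itop (fun y => Rabs (ival y - ival x) < eps).
Proof.
  simpl. intros y hy. exists (eps - Rabs (ival y - ival x)). split; [lra|].
  intros z hz. apply Rabs_def2 in hy. apply Rabs_def2 in hz.
  apply Rabs_def1; unfold Rabs in *; destruct Rcase_abs; lra.
Qed.

Lemma pcI_ed (g : I -> I) : path_continuous Itop g ->
  forall s eps, eps > 0 -> exists d, d > 0 /\ forall s', Rabs (ival s' - ival s) < d -> Rabs (ival (g s') - ival (g s)) < eps.
Proof.
  intros hg s eps he. apply (hg _ (ball_open (g s) eps) s).
  simpl. rewrite Rminus_diag, Rabs_R0; lra.
Qed.

Lemma lip_pc (g : I -> I) L : 0 < L ->
  (forall x y, Rabs (ival (g x) - ival (g y)) <= L * Rabs (ival x - ival y)) -> path_continuous Itop g.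
Proof.
  intros hL hg V HV s Hs. destruct (HV (g s) Hs) as [eps [he H]].
  destruct (divpos eps L he hL) as [d0 d1].
  exists (eps / L); split; auto. intros s' hs'. apply H.
  pose proof (hg s' s). pose proof (Rabs_pos (ival s' - ival s)). nra.
Qed.

Lemma pc_comp {M} (T : topology M) (p : I -> M) (g : I -> I) :
  path_continuous T p -> path_continuous Itop g -> path_continuous T (fun t => p (g t)).
Proof.
  intros hp hg V HV s Hs. destruct (hp V HV (g s) Hs) as [e1 [h1 H1]].
  destruct (hg _ (ball_open (g s) e1) s) as [d [hd Hd]].
  { simpl. rewrite Rminus_diag, Rabs_R0; lra. }
  exists d; split; auto.
Qed.

Lemma small_inv eps : eps > 0 -> exists N : nat, forall n, (N <= n)%nat -> / (INR n + 1) < eps.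
Proof.
  intros he. destruct (archimed_cor1 eps he) as [N [h1 h2]]. exists N. intros n hn.
  apply le_INR in hn. apply lt_INR in h2. simpl in h2.
  apply Rle_lt_trans with (/ INR N); auto. apply Rinv_le_contravar; lra.
Qed.

Lemma conv_lt t d1 d2 eps : 0 <= t <= 1 -> d1 < eps -> d2 < eps -> d1 + t * (d2 - d1) < eps.
Proof. intros. assert (0 <= (1 - t) * (eps - d1)) by (apply Rmult_le_pos; lra).
 assert (0 <= t * (eps - d2)) by (apply Rmult_le_pos; lra). destruct (Req_dec t 0); [subst; lra|].
 assert (0 < t * (eps - d2)) by (apply Rmult_lt_0_compat; lra). lra. Qed.
Lemma conv_gt t d1 d2 eps : 0 <= t <= 1 -> - eps < d1 -> - eps < d2 -> - eps < d1 + t * (d2 - d1).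
Proof. intros. pose proof (conv_lt t (-d1) (-d2) eps). lra. Qed.
Definition seg (w : nat -> I) (k : nat) (t : I) : I :=
  mkI (ival (w k) + ival t * (ival (w (S k)) - ival (w k))).

Lemma seg_val w k t : ival (seg w k t) = ival (w k) + ival t * (ival (w (S k)) - ival (w k)).
Proof.
  unfold seg. apply ival_mkI. pose proof (ival_range t). pose proof (ival_range (w k)).
  pose proof (ival_range (w (S k))). nra.
Qed.

Lemma interp_cont (z : I) (w : nat -> I) :
  (forall n, Rabs (ival (w n) - ival z) < / (INR n + 1)) ->
  path_continuous Itop (inf_concat z (seg w)).
Proof.
  intros hw. apply inf_concat_cont.
  - intros n. apply (lip_pc _ (Rabs (ival (w (S n)) - ival (w n)) + 1)).
    { pose proof (Rabs_pos (ival (w (S n)) - ival (w n))); lra. }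
    intros x y. rewrite !seg_val.
    replace (ival (w n) + ival x * (ival (w (S n)) - ival (w n)) -
             (ival (w n) + ival y * (ival (w (S n)) - ival (w n))))
      with ((ival (w (S n)) - ival (w n)) * (ival x - ival y)) by ring.
    rewrite Rabs_mult. pose proof (Rabs_pos (ival x - ival y)). nra.
  - intros n t t' h1 h2. apply I_eq. rewrite !seg_val, h1, h2. ring.
  - intros U HU Uz. destruct (HU z Uz) as [eps [he H]].
    destruct (small_inv eps he) as [N HN]. exists N. intros n hn t. apply H.
    rewrite seg_val. pose proof (hw n) as a1. pose proof (hw (S n)) as a2.
    pose proof (HN n hn). assert (/ (INR (S n) + 1) < eps).
    { apply HN. lia. }
    apply Rabs_def2 in a1. apply Rabs_def2 in a2. pose proof (ival_range t).
    replace (ival (w n) + ival t * (ival (w (S n)) - ival (w n)) - ival z) with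
      (ival (w n) - ival z + ival t * ((ival (w (S n)) - ival z) - (ival (w n) - ival z))) by ring.
    apply Rabs_def1; [apply (conv_lt (ival t) (ival (w n) - ival z) (ival (w (S n)) - ival z) eps) | apply (conv_gt (ival t) (ival (w n) - ival z) (ival (w (S n)) - ival z) eps)]; lra.
Qed.

Definition tn (n : nat) : I := mkI (1 - / (INR n + 1)).

Lemma tn_val n : ival (tn n) = 1 - / (INR n + 1).
Proof.
  unfold tn. pose proof (pos_INR n). destruct (inv_fact (INR n + 1)) as [a b]; [lra|].
  apply ival_mkI. split; nra.
Qed.

Lemma interp_tn z w n : inf_concat z (seg w) (tn n) = w n.
Proof.
  pose proof (pos_INR n). destruct (inv_fact (INR n + 1)) as [a b]; [lra|].
  rewrite (ic_blk _ _ n); rewrite tn_val; try nra.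
  apply I_eq. rewrite seg_val. rewrite ival_mkI.
  - rewrite loc_eq. replace ((1 - / (INR n + 1)) * (INR n + 1) - INR n) with 0 by nra. ring.
  - rewrite loc_eq. replace ((1 - / (INR n + 1)) * (INR n + 1) - INR n) with 0 by nra. lra.
Qed.

Lemma prod_cont2 {M} (T : topology M) (op : M -> M -> M) (e : M) (HM : pre_delta_monoid T op e)
  (p q : I -> M) : path_continuous T p -> path_continuous T q -> cont2 T (fun u v => op (p u) (q v)).
Proof.
  intros hp hq V HV u0 v0 HV0. apply NNPP; intro Hno.
  assert (Hseq : forall n : nat, exists st : I * I, Rabs (ival (fst st) - ival u0) < / (INR n + 1) /\
     Rabs (ival (snd st) - ival v0) < / (INR n + 1) /\ ~ V (op (p (fst st)) (q (snd st)))).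
  { intro n. apply NNPP; intro H. apply Hno. exists (/ (INR n + 1)). split.
    { apply Rinv_0_lt_compat. pose proof (pos_INR n); lra. }
    intros s' t' h1 h2. apply NNPP; intro h3. apply H. exists (s', t'); simpl; auto. }
  set (w := fun n => proj1_sig (constructive_indefinite_description _ (Hseq n))).
  assert (Hw : forall n, Rabs (ival (fst (w n)) - ival u0) < / (INR n + 1) /\
     Rabs (ival (snd (w n)) - ival v0) < / (INR n + 1) /\ ~ V (op (p (fst (w n))) (q (snd (w n))))).
  { intro n. unfold w. destruct (constructive_indefinite_description _ (Hseq n)); simpl; auto. }
  set (g1 := inf_concat u0 (seg (fun n => fst (w n)))).
  set (g2 := inf_concat v0 (seg (fun n => snd (w n)))).
  assert (c1 : path_continuous T (fun t => p (g1 t))).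
  { apply pc_comp; auto. apply interp_cont. intro n; apply Hw. }
  assert (c2 : path_continuous T (fun t => q (g2 t))).
  { apply pc_comp; auto. apply interp_cont. intro n; apply Hw. }
  destruct HM as [_ [_ [_ HP]]].
  pose proof (HP _ _ c1 c2) as c.
  assert (h1 : ival (mkI 1) = 1) by (apply ival_mkI; lra).
  destruct (c V HV (mkI 1)) as [d [hd Hd]].
  { unfold g1, g2. rewrite !ic_one by auto. exact HV0. }
  destruct (small_inv d hd) as [N HN].
  apply (proj2 (proj2 (Hw N))).
  pose proof (Hd (tn N)) as HH. unfold g1, g2 in HH. rewrite !interp_tn in HH.
  apply HH. rewrite tn_val, h1. pose proof (HN N (le_n _)).
  destruct (inv_fact (INR N + 1)) as [_ b]; [pose proof (pos_INR N); lra|].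
  apply Rabs_def1; lra.
Qed.

Definition reparam (g : R -> R) : I -> I :=
  inf_concat (mkI 1) (fun k t => mkI (pt k (g (ival t)))).

Lemma pt_diff k u v : Rabs (pt k u - pt k v) <= Rabs (u - v).
Proof.
  unfold pt. pose proof (pos_INR k).
  replace (INR k / (INR k + 1) + u / ((INR k + 1) * (INR k + 2)) -
     (INR k / (INR k + 1) + v / ((INR k + 1) * (INR k + 2)))) with
     ((u - v) * / ((INR k + 1) * (INR k + 2))) by (field; nra).
  rewrite Rabs_mult. rewrite (Rabs_pos_eq (/ _)).
  2: left; apply Rinv_0_lt_compat; nra.
  assert (/ ((INR k + 1) * (INR k + 2)) <= 1).
  { rewrite <- Rinv_1. apply Rinv_le_contravar; nra. }
  pose proof (Rabs_pos (u - v)). nra.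
Qed.

Lemma reparam_cont g : (forall x, 0 <= x <= 1 -> 0 <= g x <= 1) -> g 0 = 0 -> g 1 = 1 ->
  (forall x y, Rabs (g x - g y) <= 2 * Rabs (x - y)) -> path_continuous Itop (reparam g).
Proof.
  intros gr g0 g1 gl. unfold reparam. apply inf_concat_cont.
  - intros n. apply (lip_pc _ 2); [lra|]. intros x y.
    eapply Rle_trans; [apply mkI_lip|]. eapply Rle_trans; [apply pt_diff|]. apply gl.
  - intros n t t' h1 h2. rewrite h1, h2, g0, g1, pt_S. reflexivity.
  - intros U HU U1. destruct (HU _ U1) as [eps [he H]].
    destruct (small_inv eps he) as [N HN]. exists N. intros n hn t. apply H.
    pose proof (gr (ival t) (ival_range t)). rewrite !ival_mkI; try lra.
    2: apply pt_range; auto.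
    pose proof (pt_lo n _ H0). pose proof (pt_range n _ H0). pose proof (HN n hn).
    apply Rabs_def1; lra.
Qed.

Lemma reparam_0 g s : g 0 = 0 -> ival s = 0 -> ival (reparam g s) = 0.
Proof.
  intros g0 h. unfold reparam. rewrite ic_zero by auto. rewrite (ival_mkI 0) by lra. rewrite g0.
  replace (pt 0 0) with 0 by (unfold pt; simpl; field). apply ival_mkI; lra.
Qed.
Lemma reparam_1 g s : ival s = 1 -> ival (reparam g s) = 1.
Proof. intros h. unfold reparam. rewrite ic_one by auto. apply ival_mkI; lra. Qed.

Lemma reparam_pt g k r : 0 <= r < 1 -> 0 <= g r <= 1 -> reparam g (mkI (pt k r)) = mkI (pt k (g r)).
Proof. intros. unfold reparam. rewrite ic_pt by auto. rewrite ival_mkI by lra. reflexivity. Qed.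

Definition gA (x : R) := Rmin (2 * x) 1.
Definition gB (x : R) := Rmax 0 (2 * x - 1).

Lemma gA_ok : (forall x, 0 <= x <= 1 -> 0 <= gA x <= 1) /\ gA 0 = 0 /\ gA 1 = 1 /\
  (forall x y, Rabs (gA x - gA y) <= 2 * Rabs (x - y)).
Proof.
  unfold gA, Rmin. repeat split; intros; repeat destruct Rle_dec; try lra.
  all: unfold Rabs; repeat destruct Rcase_abs; lra.
Qed.
Lemma gB_ok : (forall x, 0 <= x <= 1 -> 0 <= gB x <= 1) /\ gB 0 = 0 /\ gB 1 = 1 /\
  (forall x y, Rabs (gB x - gB y) <= 2 * Rabs (x - y)).
Proof.
  unfold gB, Rmax. repeat split; intros; repeat destruct Rle_dec; try lra.
  all: unfold Rabs; repeat destruct Rcase_abs; lra.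
Qed.

Lemma ival_mkI_le0 r : r <= 0 -> ival (mkI r) = 0.
Proof. intros. unfold mkI, ival; simpl. unfold Rmax, Rmin; repeat destruct Rle_dec; lra. Qed.
Lemma ival_mkI_ge1 r : 1 <= r -> ival (mkI r) = 1.
Proof. intros. unfold mkI, ival; simpl. unfold Rmax, Rmin; repeat destruct Rle_dec; lra. Qed.

Definition jc (F : I -> I -> I) := forall s t eps, eps > 0 -> exists d, d > 0 /\ forall s' t' : I,
  Rabs (ival s' - ival s) < d -> Rabs (ival t' - ival t) < d -> Rabs (ival (F s' t') - ival (F s t)) < eps.

Definition hcomb (u v : I -> I) (s t : I) : I := mkI ((1 - ival t) * ival (u s) + ival t * ival (v s)).

Lemma hcomb_val u v s t : ival (hcomb u v s t) = (1 - ival t) * ival (u s) + ival t * ival (v s).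
Proof.
  unfold hcomb. pose proof (ival_range t). pose proof (ival_range (u s)). pose proof (ival_range (v s)).
  apply ival_mkI. nra.
Qed.

Lemma jc_hcomb u v : path_continuous Itop u -> path_continuous Itop v -> jc (hcomb u v).
Proof.
  intros hu hv s t eps he.
  destruct (pcI_ed u hu s (eps/3)) as [d1 [h1 H1]]; [lra|].
  destruct (pcI_ed v hv s (eps/3)) as [d2 [h2 H2]]; [lra|].
  exists (Rmin (Rmin d1 d2) (eps/3)). split; [repeat apply Rmin_pos; lra|].
  intros s' t' l1 l2.
  pose proof (Rmin_l (Rmin d1 d2) (eps/3)). pose proof (Rmin_r (Rmin d1 d2) (eps/3)).
  pose proof (Rmin_l d1 d2). pose proof (Rmin_r d1 d2).
  assert (a1 := H1 s' ltac:(lra)). assert (a2 := H2 s' ltac:(lra)).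
  rewrite !hcomb_val.
  pose proof (ival_range t'). pose proof (ival_range (u s)). pose proof (ival_range (v s)).
  replace ((1 - ival t') * ival (u s') + ival t' * ival (v s') - ((1 - ival t) * ival (u s) + ival t * ival (v s)))
    with ((1 - ival t') * (ival (u s') - ival (u s)) + ival t' * (ival (v s') - ival (v s)) + (ival t - ival t') * (ival (u s) - ival (v s))) by ring.
  eapply Rle_lt_trans; [apply Rabs_triang|].
  eapply Rle_lt_trans; [apply Rplus_le_compat_r, Rabs_triang|].
  rewrite !Rabs_mult.
  assert (Rabs (1 - ival t') <= 1) by (unfold Rabs; destruct Rcase_abs; lra).
  assert (Rabs (ival t') <= 1) by (unfold Rabs; destruct Rcase_abs; lra).
  assert (Rabs (ival (u s) - ival (v s)) <= 1) by (unfold Rabs; destruct Rcase_abs; lra).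
  assert (Rabs (ival t - ival t') < eps / 3) by (rewrite Rabs_minus_sym; lra).
  pose proof (Rabs_pos (1 - ival t')). pose proof (Rabs_pos (ival t')).
  pose proof (Rabs_pos (ival (u s) - ival (v s))). pose proof (Rabs_pos (ival t - ival t')).
  pose proof (Rabs_pos (ival (u s') - ival (u s))). pose proof (Rabs_pos (ival (v s') - ival (v s))).
  nra.
Qed.

Lemma cont2_comp {M} (T : topology M) (K : I -> I -> M) (F G : I -> I -> I) :
  cont2 T K -> jc F -> jc G -> cont2 T (fun s t => K (F s t) (G s t)).
Proof.
  intros hK hF hG V HV s t Hs. destruct (hK V HV _ _ Hs) as [e1 [he1 H1]].
  destruct (hF s t e1 he1) as [d1 [hd1 D1]]. destruct (hG s t e1 he1) as [d2 [hd2 D2]].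
  exists (Rmin d1 d2). split; [apply Rmin_pos; lra|]. intros s' t' l1 l2.
  pose proof (Rmin_l d1 d2). pose proof (Rmin_r d1 d2). apply H1; [apply D1|apply D2]; lra.
Qed.

Theorem mainTheorem9 (M : Type) (T : topology M) (op : M -> M -> M) (e : M)
  (HM : pre_delta_monoid T op e) (Hpc : path_connected T)
  (a b : nat -> I -> M)
  (Ha : forall n, is_loop T e (a n)) (Hb : forall n, is_loop T e (b n))
  (Hna : null_seq T e a) (Hnb : null_seq T e b) :
  path_homotopic_in T
    (inf_concat e (fun n => concat (a n) (b n)))
    (concat (inf_concat e a) (inf_concat e b))
    (setmul op (image (inf_concat e a)) (image (inf_concat e b))).
Proof.
  assert (HM' := HM). destruct HM' as [_ [Hl [Hr _]]].
  set (PA := inf_concat e a). set (PB := inf_concat e b).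
  assert (cA : path_continuous T PA).
  { apply inf_concat_cont; [intro n; apply Ha| |apply Hna].
    intros n t t' h1 h2. destruct (Ha n) as [_ [x y]]. destruct (Ha (S n)) as [_ [z w]].
    rewrite (y t h1), (z t' h2); auto. }
  assert (cB : path_continuous T PB).
  { apply inf_concat_cont; [intro n; apply Hb| |apply Hnb].
    intros n t t' h1 h2. destruct (Hb n) as [_ [x y]]. destruct (Hb (S n)) as [_ [z w]].
    rewrite (y t h1), (z t' h2); auto. }
  assert (A0 : forall n t, ival t = 0 -> a n t = e) by (intros n t h; destruct (Ha n) as [_ [p q]]; auto).
  assert (A1 : forall n t, ival t = 1 -> a n t = e) by (intros n t h; destruct (Ha n) as [_ [p q]]; auto).
  assert (B0 : forall n t, ival t = 0 -> b n t = e) by (intros n t h; destruct (Hb n) as [_ [p q]]; auto).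
  assert (B1 : forall n t, ival t = 1 -> b n t = e) by (intros n t h; destruct (Hb n) as [_ [p q]]; auto).
  assert (m0 : ival (mkI 0) = 0) by (apply ival_mkI; lra).
  assert (m1 : ival (mkI 1) = 1) by (apply ival_mkI; lra).
  assert (PA0 : forall t, ival t = 0 -> PA t = e).
  { intros t h. unfold PA. rewrite ic_zero; auto. }
  assert (PA1 : forall t, ival t = 1 -> PA t = e).
  { intros t h. unfold PA. rewrite ic_one; auto. }
  assert (PB0 : forall t, ival t = 0 -> PB t = e).
  { intros t h. unfold PB. rewrite ic_zero; auto. }
  assert (PB1 : forall t, ival t = 1 -> PB t = e).
  { intros t h. unfold PB. rewrite ic_one; auto. }
  set (uA := reparam gA). set (uB := reparam gB).
  set (vA := fun s : I => mkI (2 * ival s)). set (vB := fun s : I => mkI (2 * ival s - 1)).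
  destruct gA_ok as [gAr [gA0 [gA1 gAl]]]. destruct gB_ok as [gBr [gB0 [gB1 gBl]]].
  assert (HF : forall s, inf_concat e (fun n => concat (a n) (b n)) s = op (PA (uA s)) (PB (uB s))).
  { intros s. destruct (ival_range s) as [s0 s1].
    destruct (Req_dec (ival s) 1) as [E|E].
    { rewrite ic_one by auto. unfold uA, uB. rewrite PA1, PB1 by (apply reparam_1; auto). auto. }
    assert (hs : 0 <= ival s < 1) by lra. pose proof (loc_range _ hs) as hr.
    rewrite (I_decomp s) by lra.
    set (k := blk (ival s)) in *. set (r := loc k (ival s)) in *.
    rewrite ic_pt by auto. unfold uA, uB. rewrite !reparam_pt; try lra; try (apply gAr; lra); try (apply gBr; lra).
    unfold concat. rewrite ival_mkI by lra. unfold gA, gB.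
    destruct (Rle_dec r (1/2)).
    - replace (Rmax 0 (2 * r - 1)) with 0 by (unfold Rmax; destruct Rle_dec; lra).
      unfold PB. rewrite ic_pt by lra. rewrite B0 by auto. rewrite Hr.
      destruct (Req_dec r (1/2)).
      + replace (Rmin (2 * r) 1) with 1 by (unfold Rmin; destruct Rle_dec; lra).
        unfold PA. rewrite ic_pt1. rewrite (A1 k), (A0 (S k)); auto. rewrite ival_mkI; lra.
      + replace (Rmin (2 * r) 1) with (2 * r) by (unfold Rmin; destruct Rle_dec; lra).
        unfold PA. rewrite ic_pt by lra. reflexivity.
    - replace (Rmax 0 (2 * r - 1)) with (2 * r - 1) by (unfold Rmax; destruct Rle_dec; lra).
      replace (Rmin (2 * r) 1) with 1 by (unfold Rmin; destruct Rle_dec; lra).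
      unfold PA. rewrite ic_pt1. rewrite A0 by auto. rewrite Hl.
      unfold PB. rewrite ic_pt by lra. reflexivity. }
  assert (HG : forall s, concat PA PB s = op (PA (vA s)) (PB (vB s))).
  { intros s. unfold concat, vA, vB. destruct Rle_dec.
    - rewrite (PB0 (mkI _)) by (apply ival_mkI_le0; lra). auto.
    - rewrite (PA1 (mkI _)) by (apply ival_mkI_ge1; lra). auto. }
  assert (cuA : path_continuous Itop uA) by (apply reparam_cont; auto).
  assert (cuB : path_continuous Itop uB) by (apply reparam_cont; auto).
  assert (cvA : path_continuous Itop vA).
  { apply (lip_pc _ 2); [lra|]. intros x y. unfold vA. eapply Rle_trans; [apply mkI_lip|].
    replace (2 * ival x - 2 * ival y) with (2 * (ival x - ival y)) by ring.
    rewrite Rabs_mult, Rabs_pos_eq; lra. }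
  assert (cvB : path_continuous Itop vB).
  { apply (lip_pc _ 2); [lra|]. intros x y. unfold vB. eapply Rle_trans; [apply mkI_lip|].
    replace (2 * ival x - 1 - (2 * ival y - 1)) with (2 * (ival x - ival y)) by ring.
    rewrite Rabs_mult, Rabs_pos_eq; lra. }
  set (X := hcomb uA vA). set (Y := hcomb uB vB).
  assert (X0 : forall s t, ival t = 0 -> X s t = uA s).
  { intros s t h. apply I_eq. unfold X. rewrite hcomb_val, h. ring. }
  assert (X1 : forall s t, ival t = 1 -> X s t = vA s).
  { intros s t h. apply I_eq. unfold X. rewrite hcomb_val, h. ring. }
  assert (Y0 : forall s t, ival t = 0 -> Y s t = uB s).
  { intros s t h. apply I_eq. unfold Y. rewrite hcomb_val, h. ring. }
  assert (Y1 : forall s t, ival t = 1 -> Y s t = vB s).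
  { intros s t h. apply I_eq. unfold Y. rewrite hcomb_val, h. ring. }
  assert (S0 : forall s t, ival s = 0 -> X s t = uA s /\ Y s t = uB s).
  { intros s t h. unfold X, Y. split; apply I_eq; rewrite hcomb_val.
    - unfold uA, vA. rewrite reparam_0 by auto. rewrite h, Rmult_0_r, ival_mkI_le0; lra.
    - unfold uB, vB. rewrite reparam_0 by auto. rewrite h, Rmult_0_r, ival_mkI_le0; lra. }
  assert (S1 : forall s t, ival s = 1 -> X s t = uA s /\ Y s t = uB s).
  { intros s t h. unfold X, Y. split; apply I_eq; rewrite hcomb_val.
    - unfold uA, vA. rewrite reparam_1 by auto. rewrite h, ival_mkI_ge1; lra.
    - unfold uB, vB. rewrite reparam_1 by auto. rewrite h, ival_mkI_ge1; lra. }
  exists (fun s t => op (PA (X s t)) (PB (Y s t))).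
  split; [|split; [|split; [|split; [|split]]]].
  - apply (cont2_comp T (fun u v => op (PA u) (PB v))).
    + apply (prod_cont2 T op e HM); auto.
    + apply jc_hcomb; auto.
    + apply jc_hcomb; auto.
  - intros s t h. rewrite X0, Y0 by auto. symmetry; apply HF.
  - intros s t h. rewrite X1, Y1 by auto. symmetry; apply HG.
  - intros s t h. destruct (S0 s t h) as [-> ->]. symmetry; apply HF.
  - intros s t h. destruct (S1 s t h) as [-> ->]. symmetry; apply HF.
  - intros s t. exists (PA (X s t)), (PB (Y s t)). split; [|split]; auto.
    + exists (X s t); reflexivity.
    + exists (Y s t); reflexivity.
Qed.
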